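(* Let $\mathcal C$ be a Markov category that has conditionals and precise supports. Then the relation $\sim$ on states $I \leadsto X$ of $\mathrm{Obs}(\mathcal C)$ is a functorial equivalence relation. That is, it is an equivalence relation, and for all states $(K,\psi,o),(K',\psi',o') : I\leadsto X$ with $(K,\psi,o)\sim(K',\psi',o')$ and every morphism $(H,f,v):X\leadsto Y$ of $\mathrm{Obs}(\mathcal C)$ we have \[(H\otimes K,(f\otimes \mathrm{id}_K)\psi, v\otimes o)\ \sim\ (H\otimes K',(f\otimes\mathrm{id}_{K'})\psi', v\otimes o').\]
   Context: A Markov category is a symmetric monoidal category $(\mathcal C,\otimes,I)$ (assumed strict monoidal) in which every object $X$ carries a commutative comonoid $\mathrm{copy}_X:X\to X\otimes X$, $\mathrm{del}_X:X\to I$, compatible with $\otimes$ (i.e. $\mathrm{copy}_{X\otimes Y}$, $\mathrm{del}_{X\otimes Y}$ are obtained from those of $X$ and $Y$ using the symmetry), and in which $I$ is terminal. Write $gf$ for $g\circ f$. A morphism $f:X\to Y$ is deterministic if $\mathrm{copy}_Y f=(f\otimes f)\mathrm{copy}_X$. For $f:A\to X$, $g:A\to Y$ put $\langle f,g\rangle=(f\otimes g)\mathrm{copy}_A$. For $f:A\to X\otimes Y$ the marginals are $f_X=(\mathrm{id}_X\otimes\mathrm{del}_Y)f$ and $f_Y=(\mathrm{del}_X\otimes \mathrm{id}_Y)f$. A state is a morphism $I\to X$. A conditional of $f:A\to X\otimes Y$ with respect to $X$ is a morphism $f|_X:X\otimes A\to Y$ with $f=(\mathrm{id}_X\otimes f|_X)(\mathrm{copy}_X\otimes\mathrm{id}_A)(f_X\otimes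 \mathrm{id}_A)\mathrm{copy}_A$ (for a state $\psi:I\to X\otimes Y$: $\psi=\langle\mathrm{id}_X,\psi|_X\rangle\psi_X$); conditionals with respect to $Y$ are defined symmetrically; $\mathcal C$ has conditionals if all such conditionals exist. For a state $\mu:I\to X$ and $f,g:X\to Y$, write $f=_\mu g$ if $\langle\mathrm{id}_X,f\rangle\mu=\langle\mathrm{id}_X,g\rangle\mu$. For states $\mu,\nu:I\to X$, $\mu\ll\nu$ means: for all $Y$ and all $f,g:X\to Y$, $f=_\nu g$ implies $f=_\mu g$. $\mathcal C$ has precise supports if for all deterministic $x:I\to X$, $y:I\to Y$, all $f:X\to Y$ and all $\mu:I\to X$: $x\otimes y\ll\langle\mathrm{id}_X,f\rangle\mu$ iff ($x\ll\mu$ and $y\ll fx$). The category $\mathrm{Obs}(\mathcal C)$ has the objects of $\mathcal C$; a morphism $X\leadsto Y$ is a triple $(K,f,o)$ with $K$ an object, $f:X\to Y\otimes K$ in $\mathcal C$ and $o:I\to K$ deterministic; identities are $(I,\mathrm{id}_X,\mathrm{id}_I)$; composition is $(K',f',o')\bullet(K,f,o)=(K'\otimes K,(f'\otimes\mathrm{id}_K)f,o'\otimes o)$; the tensor of $(K,f,o):X\leadsto Y$ and $(K',f',o'):X'\leadsto Y'$ is $(K'\otimes K,(\mathrm{id}_{Y'}\otimes\mathrm{swap}_{K',Y}\otimes \mathrm{id}_K)(f'\otimes f),o'\otimes o)$ (order of factors as written). A state $(K,\psi,o):I\leadsto X$ (so $\psi:I\to X\otimes K$) is an inference problem; it succeeds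 if $o\ll\psi_K$, in which case its posterior is $\psi|_K\, o:I\to X$, where $\psi|_K:K\to X$ is a conditional of $\psi$ with respect to $K$. Define $(K,\psi,o)\sim(K',\psi',o')$ iff either ($o\ll\psi_K$, $o'\ll\psi'_{K'}$ and $\psi|_K o=\psi'|_{K'}o'$) or ($o\not\ll\psi_K$ and $o'\not\ll\psi'_{K'}$). *)

(* Defs.v *)
(** Strictness is expressed by propositional equalities of objects
    [tens_assoc], [tens_unitl], [tens_unitr]; morphisms are transported along
    them with [cast] (an identity morphism up to transport). *)
Record MarkovData := {
  ob : Type;
  hom : ob -> ob -> Type;
  idm : forall X, hom X X;
  comp : forall X Y Z, hom Y Z -> hom X Y -> hom X Z;
  tens : ob -> ob -> ob;
  unit : ob;
  tensm : forall X Y X' Y', hom X Y -> hom X' Y' -> hom (tens X X') (tens Y Y');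
  tens_assoc : forall X Y Z, tens (tens X Y) Z = tens X (tens Y Z);
  tens_unitl : forall X, tens unit X = X;
  tens_unitr : forall X, tens X unit = X;
  swap : forall X Y, hom (tens X Y) (tens Y X);
  copy : forall X, hom X (tens X X);
  del : forall X, hom X unit }.

Arguments hom {m} _ _.
Arguments idm {m} X.
Arguments comp {m X Y Z} _ _.
Arguments tens {m} _ _.
Arguments unit {m}.
Arguments tensm {m X Y X' Y'} _ _.
Arguments tens_assoc {m} X Y Z.
Arguments tens_unitl {m} X.
Arguments tens_unitr {m} X.
Arguments swap {m} X Y.
Arguments copy {m} X.
Arguments del {m} X.

Definition cast {C : MarkovData} {X Y : ob C} (e : X = Y) : hom X Y :=
  match e in _ = Z return hom X Z with eq_refl => idm X end.

Declare Scope markov_scope.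
Delimit Scope markov_scope with MK.
Open Scope markov_scope.
Notation "g ∘ f" := (comp g f) (at level 40, left associativity) : markov_scope.
Notation "f ⊗ g" := (tensm f g) (at level 34, left associativity) : markov_scope.

Record MarkovAxioms (C : MarkovData) : Prop := {
  comp_idl : forall (X Y : ob C) (f : hom X Y), idm Y ∘ f = f;
  comp_idr : forall (X Y : ob C) (f : hom X Y), f ∘ idm X = f;
  comp_assoc : forall (X Y Z W : ob C) (f : hom X Y) (g : hom Y Z) (h : hom Z W),
      h ∘ (g ∘ f) = (h ∘ g) ∘ f;
  tensm_id : forall (X Y : ob C), idm X ⊗ idm Y = idm (tens X Y);
  tensm_comp : forall (X Y Z X' Y' Z' : ob C) (f : hom X Y) (g : hom Y Z)
      (f' : hom X' Y') (g' : hom Y' Z'), (g ∘ f) ⊗ (g' ∘ f') = (g ⊗ g') ∘ (f ⊗ f');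
  tensm_assoc : forall (X Y Z X' Y' Z' : ob C) (f : hom X X') (g : hom Y Y') (h : hom Z Z'),
      cast (tens_assoc X' Y' Z') ∘ ((f ⊗ g) ⊗ h) = (f ⊗ (g ⊗ h)) ∘ cast (tens_assoc X Y Z);
  tensm_unitl : forall (X Y : ob C) (f : hom X Y),
      cast (tens_unitl Y) ∘ (idm unit ⊗ f) = f ∘ cast (tens_unitl X);
  tensm_unitr : forall (X Y : ob C) (f : hom X Y),
      cast (tens_unitr Y) ∘ (f ⊗ idm unit) = f ∘ cast (tens_unitr X);
  swap_nat : forall (X Y X' Y' : ob C) (f : hom X X') (g : hom Y Y'),
      swap X' Y' ∘ (f ⊗ g) = (g ⊗ f) ∘ swap X Y;
  swap_inv : forall (X Y : ob C), swap Y X ∘ swap X Y = idm (tens X Y);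
  swap_hex : forall (X Y Z : ob C),
      swap X (tens Y Z) =
        cast (eq_sym (tens_assoc Y Z X)) ∘ (idm Y ⊗ swap X Z)
        ∘ cast (tens_assoc Y X Z) ∘ (swap X Y ⊗ idm Z) ∘ cast (eq_sym (tens_assoc X Y Z));
  swap_unit : forall (X : ob C),
      cast (tens_unitl X) ∘ swap X unit = cast (tens_unitr X);
  copy_counitl : forall (X : ob C), cast (tens_unitl X) ∘ (del X ⊗ idm X) ∘ copy X = idm X;
  copy_counitr : forall (X : ob C), cast (tens_unitr X) ∘ (idm X ⊗ del X) ∘ copy X = idm X;
  copy_coassoc : forall (X : ob C),
      cast (tens_assoc X X X) ∘ (copy X ⊗ idm X) ∘ copy X = (idm X ⊗ copy X) ∘ copy X;
  copy_comm : forall (X : ob C), swap X X ∘ copy X = copy X;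
  copy_tens : forall (X Y : ob C),
      copy (tens X Y) =
        cast (eq_trans (f_equal (tens X) (tens_assoc Y X Y))
                       (eq_sym (tens_assoc X Y (tens X Y))))
        ∘ (idm X ⊗ (swap X Y ⊗ idm Y))
        ∘ cast (eq_trans (tens_assoc X X (tens Y Y))
                         (f_equal (tens X) (eq_sym (tens_assoc X Y Y))))
        ∘ (copy X ⊗ copy Y);
  del_tens : forall (X Y : ob C),
      del (tens X Y) = cast (tens_unitl unit) ∘ (del X ⊗ del Y);
  unit_terminal : forall (X : ob C) (f g : hom X unit), f = g }.

Section Defs.
Context {C : MarkovData}.

Definition deterministic {X Y : ob C} (f : hom X Y) : Prop :=
  copy Y ∘ f = (f ⊗ f) ∘ copy X.

Definition pairing {A X Y : ob C} (f : hom A X) (g : hom A Y) : hom A (tens X Y) :=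
  (f ⊗ g) ∘ copy A.

Definition margX {A X Y : ob C} (f : hom A (tens X Y)) : hom A X :=
  cast (tens_unitr X) ∘ (idm X ⊗ del Y) ∘ f.
Definition margY {A X Y : ob C} (f : hom A (tens X Y)) : hom A Y :=
  cast (tens_unitl Y) ∘ (del X ⊗ idm Y) ∘ f.

Definition is_condX {A X Y : ob C} (f : hom A (tens X Y)) (c : hom (tens X A) Y) : Prop :=
  f = (idm X ⊗ c) ∘ cast (tens_assoc X X A) ∘ (copy X ⊗ idm A) ∘ (margX f ⊗ idm A) ∘ copy A.

Definition is_condY {A X Y : ob C} (f : hom A (tens X Y)) (c : hom (tens Y A) X) : Prop :=
  is_condX (swap X Y ∘ f) c.

Definition stens {X Y : ob C} (x : hom unit X) (y : hom unit Y) : hom unit (tens X Y) :=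
  (x ⊗ y) ∘ cast (eq_sym (tens_unitl unit)).

Definition as_eq {X Y : ob C} (mu : hom unit X) (f g : hom X Y) : Prop :=
  pairing (idm X) f ∘ mu = pairing (idm X) g ∘ mu.

Definition abs_cont {X : ob C} (mu nu : hom unit X) : Prop :=
  forall (Y : ob C) (f g : hom X Y), as_eq nu f g -> as_eq mu f g.

(** Morphisms X ~> Y of Obs(C): triples (K, f, o); determinism of o is the
    separate predicate [obs_valid]. *)
Record ObsHom (X Y : ob C) := {
  okey : ob C;
  omap : hom X (tens Y okey);
  oobs : hom unit okey }.

Arguments okey {X Y} _.
Arguments omap {X Y} _.
Arguments oobs {X Y} _.

Definition obs_valid {X Y : ob C} (m : ObsHom X Y) : Prop := deterministic (oobs m).

Definition obs_comp {X Y Z : ob C} (m' : ObsHom Y Z) (m : ObsHom X Y) : ObsHom X Z :=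
  {| okey := tens (okey m') (okey m);
     omap := cast (tens_assoc Z (okey m') (okey m)) ∘ (omap m' ⊗ idm (okey m)) ∘ omap m;
     oobs := stens (oobs m') (oobs m) |}.

Definition succeeds {X : ob C} (s : ObsHom unit X) : Prop :=
  abs_cont (oobs s) (margY (omap s)).

(** posterior psi|_K o, for a conditional c : K ⊗ I -> X of psi w.r.t. K *)
Definition posterior {X : ob C} (s : ObsHom unit X) (c : hom (tens (okey s) unit) X)
  : hom unit X :=
  c ∘ cast (eq_sym (tens_unitr (okey s))) ∘ oobs s.

Definition obs_sim {X : ob C} (s t : ObsHom unit X) : Prop :=
  (succeeds s /\ succeeds t /\
     forall (c : hom (tens (okey s) unit) X) (c' : hom (tens (okey t) unit) X),
       is_condY (omap s) c -> is_condY (omap t) c' -> posterior s c = posterior t c')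
  \/ (~ succeeds s /\ ~ succeeds t).

End Defs.

Arguments okey {C X Y} _.
Arguments omap {C X Y} _.
Arguments oobs {C X Y} _.

Definition has_conditionals (C : MarkovData) : Prop :=
  (forall (A X Y : ob C) (f : hom A (tens X Y)), exists c, is_condX f c) /\
  (forall (A X Y : ob C) (f : hom A (tens X Y)), exists c, is_condY f c).

Definition precise_supports (C : MarkovData) : Prop :=
  forall (X Y : ob C) (x : hom unit X) (y : hom unit Y) (f : hom X Y) (mu : hom unit X),
    deterministic x -> deterministic y ->
    (abs_cont (stens x y) (pairing (idm X) f ∘ mu) <-> (abs_cont x mu /\ abs_cont y (f ∘ x))).

(* Main.v *)
Require Import Defs.
From Stdlib Require Import ProofIrrelevance Classical.

Section Markov.
Context {C : MarkovData} (HC : MarkovAxioms C).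

Lemma cidl {X Y : ob C} (f : hom X Y) : idm Y ∘ f = f.
Proof. exact (comp_idl _ HC X Y f). Qed.
Lemma cidr {X Y : ob C} (f : hom X Y) : f ∘ idm X = f.
Proof. exact (comp_idr _ HC X Y f). Qed.
Lemma cassoc {X Y Z W : ob C} (f : hom X Y) (g : hom Y Z) (h : hom Z W) :
  h ∘ (g ∘ f) = (h ∘ g) ∘ f.
Proof. exact (comp_assoc _ HC X Y Z W f g h). Qed.
Lemma tid (X Y : ob C) : idm X ⊗ idm Y = idm (tens X Y).
Proof. exact (tensm_id _ HC X Y). Qed.
Lemma tcomp {X Y Z X' Y' Z' : ob C} (f : hom X Y) (g : hom Y Z) (f' : hom X' Y') (g' : hom Y' Z') :
  (g ∘ f) ⊗ (g' ∘ f') = (g ⊗ g') ∘ (f ⊗ f').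
Proof. exact (tensm_comp _ HC X Y Z X' Y' Z' f g f' g'). Qed.
Lemma snat {X Y X' Y' : ob C} (f : hom X X') (g : hom Y Y') :
  swap X' Y' ∘ (f ⊗ g) = (g ⊗ f) ∘ swap X Y.
Proof. exact (swap_nat _ HC X Y X' Y' f g). Qed.
Lemma sinv (X Y : ob C) : swap Y X ∘ swap X Y = idm (tens X Y).
Proof. exact (swap_inv _ HC X Y). Qed.
Lemma ccomm (X : ob C) : swap X X ∘ copy X = copy X.
Proof. exact (copy_comm _ HC X). Qed.
Lemma uterm {X : ob C} (f g : hom X unit) : f = g.
Proof. exact (unit_terminal _ HC X f g). Qed.

Definition teq {X Y X' Y' : ob C} (e : X = X') (e' : Y = Y') : tens X Y = tens X' Y' :=
  match e in _ = X1, e' in _ = Y1 return tens X Y = tens X1 Y1 with eq_refl, eq_refl => eq_refl end.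
Lemma cast_irr {X Y : ob C} (e e' : X = Y) : cast e = cast e'.
Proof. rewrite (proof_irrelevance _ e e'); reflexivity. Qed.
Lemma cast_id {X : ob C} (e : X = X) : cast e = idm X.
Proof. rewrite (proof_irrelevance _ e eq_refl); reflexivity. Qed.
Lemma cast_comp {X Y Z : ob C} (e1 : X = Y) (e2 : Y = Z) :
  cast e2 ∘ cast e1 = cast (eq_trans e1 e2).
Proof. destruct e2. simpl. apply cidl. Qed.
Lemma cast_comp_l {X Y Z W : ob C} (h : hom Z W) (e1 : X = Y) (e2 : Y = Z) :
  h ∘ cast e2 ∘ cast e1 = h ∘ cast (eq_trans e1 e2).
Proof. rewrite <- cassoc, cast_comp; reflexivity. Qed.
Lemma cast_tens {X Y X' Y' : ob C} (e : X = X') (e' : Y = Y') :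
  cast e ⊗ cast e' = cast (teq e e').
Proof. destruct e, e'. exact (tid _ _). Qed.
Lemma cast_tens_l {X Y Y' : ob C} (e' : Y = Y') :
  idm X ⊗ cast e' = cast (teq (@eq_refl _ X) e').
Proof. destruct e'. exact (tid _ _). Qed.
Lemma cast_tens_r {X X' Y : ob C} (e : X = X') :
  cast e ⊗ idm Y = cast (teq e (@eq_refl _ Y)).
Proof. destruct e. exact (tid _ _). Qed.
Lemma cast_cancel_l {X Y Z : ob C} (e : Y = Z) (f : hom X Y) (g : hom X Z) :
  cast e ∘ f = g -> f = cast (eq_sym e) ∘ g.
Proof. intros H; subst g. rewrite cassoc, cast_comp, cast_id, cidl. reflexivity. Qed.
Lemma cast_cancel_r {X Y Z : ob C} (e : X = Y) (f : hom Y Z) (g : hom X Z) :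
  f ∘ cast e = g -> f = g ∘ cast (eq_sym e).
Proof. intros H; subst g. rewrite <- cassoc, cast_comp, cast_id, cidr. reflexivity. Qed.

Ltac cln := repeat match goal with H : _ |- _ => progress rewrite ?cidl, ?cidr in H end; rewrite ?cidl, ?cidr.
Definition HE {A B A' B' : ob C} (f : hom A B) (f' : hom A' B') : Prop :=
  exists (e0 : A = A') (e1 : B = B'), cast e1 ∘ f = f' ∘ cast e0.

Lemma HE_use {A B A' B' : ob C} (f : hom A B) (f' : hom A' B') :
  HE f f' -> forall (e0 : A = A') (e1 : B = B'), cast e1 ∘ f = f' ∘ cast e0.
Proof. intros [d0 [d1 H]] e0 e1. rewrite (cast_irr e0 d0), (cast_irr e1 d1). exact H. Qed.
Lemma HE_eq {A B : ob C} (f f' : hom A B) : HE f f' -> f = f'.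
Proof. intros H. pose proof (HE_use _ _ H eq_refl eq_refl) as H'. simpl in H'.
  rewrite cidl, cidr in H'. exact H'. Qed.
Lemma HE_of_eq {A B : ob C} (f f' : hom A B) : f = f' -> HE f f'.
Proof. intros ->. exists eq_refl, eq_refl. simpl. rewrite ?cidl, ?cidr. reflexivity. Qed.
Lemma HE_refl {A B : ob C} (f : hom A B) : HE f f.
Proof. apply HE_of_eq; reflexivity. Qed.
Lemma HE_sym {A B A' B' : ob C} (f : hom A B) (f' : hom A' B') : HE f f' -> HE f' f.
Proof. intros [e0 [e1 H]]. destruct e0, e1. exists eq_refl, eq_refl. simpl in *.
  cln. auto. Qed.
Lemma HE_trans {A B A' B' A'' B'' : ob C} (f : hom A B) (f' : hom A' B') (f'' : hom A'' B'') :
  HE f f' -> HE f' f'' -> HE f f''.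
Proof. intros [e0 [e1 H]] [d0 [d1 H']]. destruct e0, e1, d0, d1. exists eq_refl, eq_refl. simpl in *.
  cln. congruence. Qed.
Lemma HE_comp {A B D A' B' D' : ob C} (f : hom A B) (g : hom B D) (f' : hom A' B') (g' : hom B' D') :
  HE f f' -> HE g g' -> HE (g ∘ f) (g' ∘ f').
Proof. intros [e0 [e1 H]] [d0 [d1 H']]. destruct e0, e1, d1. rewrite (proof_irrelevance _ d0 eq_refl) in H'.
  exists eq_refl, eq_refl. simpl in *. cln. congruence. Qed.
Lemma HE_tens {A B A' B' P Q P' Q' : ob C} (f : hom A B) (f' : hom A' B') (g : hom P Q) (g' : hom P' Q') :
  HE f f' -> HE g g' -> HE (f ⊗ g) (f' ⊗ g').
Proof. intros [e0 [e1 H]] [d0 [d1 H']]. destruct e0, e1, d0, d1.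
  exists eq_refl, eq_refl. simpl in *. cln. congruence. Qed.
Lemma HE_cast {A B : ob C} (e : A = B) : HE (cast e) (idm B).
Proof. exists e, eq_refl. simpl. rewrite ?cidl, ?cidr. reflexivity. Qed.
Lemma HE_cast' {A B : ob C} (e : A = B) : HE (cast e) (idm A).
Proof. exists eq_refl, (eq_sym e). rewrite cast_comp, cast_id. simpl. rewrite ?cidl, ?cidr. reflexivity. Qed.
Lemma HE_castl {A B D A' B' : ob C} (f : hom A B) (e : B = D) (f' : hom A' B') :
  HE f f' -> HE (cast e ∘ f) f'.
Proof. intros H. pose proof H as [e0 [e1 _]]. eapply HE_trans.
  apply (HE_comp f (cast e) f' (idm B')). exact H. destruct e1. apply HE_cast'. rewrite cidl. apply HE_refl. Qed.
Lemma HE_castr {A B D A' B' : ob C} (f : hom B D) (e : A = B) (f' : hom A' B') :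
  HE f f' -> HE (f ∘ cast e) f'.
Proof. intros H. pose proof H as [e0 [e1 _]]. eapply HE_trans.
  apply (HE_comp (cast e) f (idm A') f'). destruct e0. apply HE_cast. exact H. rewrite cidr. apply HE_refl. Qed.
Lemma HE_castE {A B B' : ob C} (e : B = B') (f : hom A B) (g : hom A B') : cast e ∘ f = g -> HE f g.
Proof. intros H. exists eq_refl, e. simpl. rewrite cidr. exact H. Qed.
Lemma HE_assoc {X Y Z X' Y' Z' : ob C} (f : hom X X') (g : hom Y Y') (h : hom Z Z') :
  HE ((f ⊗ g) ⊗ h) (f ⊗ (g ⊗ h)).
Proof. exists (tens_assoc X Y Z), (tens_assoc X' Y' Z'). exact (tensm_assoc _ HC _ _ _ _ _ _ f g h). Qed.
Lemma HE_unitl {X Y : ob C} (f : hom X Y) : HE (idm unit ⊗ f) f.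
Proof. exists (tens_unitl X), (tens_unitl Y). exact (tensm_unitl _ HC _ _ f). Qed.
Lemma HE_unitr {X Y : ob C} (f : hom X Y) : HE (f ⊗ idm unit) f.
Proof. exists (tens_unitr X), (tens_unitr Y). exact (tensm_unitr _ HC _ _ f). Qed.


Definition p1 {X Y : ob C} : hom (tens X Y) X := cast (tens_unitr X) ∘ (idm X ⊗ del Y).
Definition p2 {X Y : ob C} : hom (tens X Y) Y := cast (tens_unitl Y) ∘ (del X ⊗ idm Y).

Lemma to_II {X : ob C} (f g : hom X (tens unit unit)) : f = g.
Proof. transitivity (cast (eq_sym (tens_unitl unit)) ∘ (cast (tens_unitl unit) ∘ f)).
  apply cast_cancel_l; reflexivity.
  rewrite (uterm (cast (tens_unitl unit) ∘ f) (cast (tens_unitl unit) ∘ g)).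
  symmetry; apply cast_cancel_l; reflexivity. Qed.
Lemma copy_unit : copy (@unit C) = cast (eq_sym (tens_unitl unit)).
Proof. apply to_II. Qed.
Lemma swap_II : swap (@unit C) unit = idm _.
Proof. assert (H : cast (tens_unitl unit) ∘ swap unit unit = cast (tens_unitl (@unit C))) by apply uterm.
  apply cast_cancel_l in H. rewrite H, cast_comp, cast_id. reflexivity. Qed.
Lemma swap_unit' (Y : ob C) : cast (tens_unitr Y) ∘ swap unit Y = cast (tens_unitl Y).
Proof. rewrite <- (swap_unit _ HC Y). rewrite <- cassoc, sinv, cidr. reflexivity. Qed.

Lemma p1_tens {X Y X' Y' : ob C} (f : hom X X') (g : hom Y Y') : p1 ∘ (f ⊗ g) = f ∘ p1.
Proof. unfold p1. rewrite <- cassoc, <- tcomp, cidl.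
  rewrite (uterm (del Y' ∘ g) (del Y)).
  replace (f ⊗ del Y) with ((f ⊗ idm unit) ∘ (idm X ⊗ del Y)) by (rewrite <- tcomp, cidl, cidr; reflexivity).
  rewrite cassoc.
  rewrite (tensm_unitr _ HC). rewrite <- cassoc. reflexivity. Qed.
Lemma p2_tens {X Y X' Y' : ob C} (f : hom X X') (g : hom Y Y') : p2 ∘ (f ⊗ g) = g ∘ p2.
Proof. unfold p2. rewrite <- cassoc, <- tcomp, cidl.
  rewrite (uterm (del X' ∘ f) (del X)).
  replace (del X ⊗ g) with ((idm unit ⊗ g) ∘ (del X ⊗ idm Y)) by (rewrite <- tcomp, cidl, cidr; reflexivity).
  rewrite cassoc.
  rewrite (tensm_unitl _ HC). rewrite <- cassoc. reflexivity. Qed.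
Lemma p1_copy (X : ob C) : p1 ∘ copy X = idm X.
Proof. exact (copy_counitr _ HC X). Qed.
Lemma p2_copy (X : ob C) : p2 ∘ copy X = idm X.
Proof. exact (copy_counitl _ HC X). Qed.
Lemma p1_swap (X Y : ob C) : p1 ∘ swap X Y = p2.
Proof. unfold p1, p2. rewrite <- cassoc.
  rewrite <- (snat (del X) (idm Y)). rewrite cassoc, swap_unit'. reflexivity. Qed.
Lemma p2_swap (X Y : ob C) : p2 ∘ swap X Y = p1.
Proof. rewrite <- (p1_swap Y X). rewrite <- cassoc, sinv, cidr. reflexivity. Qed.

Lemma tens_pair {A X Y X' Y' : ob C} (f : hom A X) (g : hom A Y) (a : hom X X') (b : hom Y Y') :
  (a ⊗ b) ∘ pairing f g = pairing (a ∘ f) (b ∘ g).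
Proof. unfold pairing. rewrite cassoc, <- tcomp. reflexivity. Qed.
Lemma pair_det {B A X Y : ob C} (f : hom A X) (g : hom A Y) (h : hom B A) :
  deterministic h -> pairing f g ∘ h = pairing (f ∘ h) (g ∘ h).
Proof. unfold pairing, deterministic. intros Hh. rewrite <- cassoc, Hh, cassoc, <- tcomp. reflexivity. Qed.
Lemma swap_pair {A X Y : ob C} (f : hom A X) (g : hom A Y) : swap X Y ∘ pairing f g = pairing g f.
Proof. unfold pairing. rewrite cassoc, snat, <- cassoc, ccomm. reflexivity. Qed.
Lemma p1_pair {A X Y : ob C} (f : hom A X) (g : hom A Y) : p1 ∘ pairing f g = f.
Proof. unfold pairing. rewrite cassoc, p1_tens, <- cassoc, p1_copy, cidr. reflexivity. Qed.
Lemma p2_pair {A X Y : ob C} (f : hom A X) (g : hom A Y) : p2 ∘ pairing f g = g.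
Proof. unfold pairing. rewrite cassoc, p2_tens, <- cassoc, p2_copy, cidr. reflexivity. Qed.
Lemma pair_id_id (X : ob C) : pairing (idm X) (idm X) = copy X.
Proof. unfold pairing. rewrite tid, cidl. reflexivity. Qed.

Ltac castn := repeat (rewrite ?cidl, ?cidr, ?tid, ?cast_tens, ?cast_tens_l, ?cast_tens_r, ?cast_comp, ?cast_comp_l).

Lemma assoc_pair {A X Y Z : ob C} (f : hom A X) (g : hom A Y) (h : hom A Z)
  (e : tens (tens X Y) Z = tens X (tens Y Z)) :
  cast e ∘ pairing (pairing f g) h = pairing f (pairing g h).
Proof. unfold pairing.
  replace (((f ⊗ g) ∘ copy A) ⊗ h) with (((f ⊗ g) ⊗ h) ∘ (copy A ⊗ idm A)) by (rewrite <- tcomp, cidr; reflexivity).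
  rewrite !cassoc. rewrite (HE_use _ _ (HE_assoc f g h) (tens_assoc A A A) e).
  rewrite <- !cassoc. rewrite (cassoc (copy A) (copy A ⊗ idm A)). rewrite (copy_coassoc _ HC).
  rewrite cassoc, <- tcomp, cidr. reflexivity. Qed.

Lemma det_id (X : ob C) : deterministic (idm X).
Proof. unfold deterministic. rewrite cidr, tid, cidl. reflexivity. Qed.
Lemma det_cast {X Y : ob C} (e : X = Y) : deterministic (cast e).
Proof. destruct e. apply det_id. Qed.
Lemma det_comp {X Y Z : ob C} (f : hom X Y) (g : hom Y Z) :
  deterministic f -> deterministic g -> deterministic (g ∘ f).
Proof. unfold deterministic. intros Hf Hg. rewrite cassoc, Hg, <- cassoc, Hf, cassoc, <- tcomp. reflexivity. Qed.
Lemma det_del (X : ob C) : deterministic (del X).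
Proof. apply to_II. Qed.

Definition sig (A B D E : ob C) : hom (tens (tens A B) (tens D E)) (tens (tens A D) (tens B E)) :=
  cast (eq_trans (f_equal (tens A) (tens_assoc D B E)) (eq_sym (tens_assoc A D (tens B E))))
  ∘ (idm A ⊗ (swap B D ⊗ idm E))
  ∘ cast (eq_trans (tens_assoc A B (tens D E)) (f_equal (tens A) (eq_sym (tens_assoc B D E)))).

Lemma copy_sig (X Y : ob C) : copy (tens X Y) = sig X X Y Y ∘ (copy X ⊗ copy Y).
Proof. exact (copy_tens _ HC X Y). Qed.

Lemma sig_nat {A B D E A' B' D' E' : ob C} (a : hom A A') (b : hom B B') (d : hom D D') (e : hom E E') :
  sig A' B' D' E' ∘ ((a ⊗ b) ⊗ (d ⊗ e)) = ((a ⊗ d) ⊗ (b ⊗ e)) ∘ sig A B D E.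
Proof. apply HE_eq. unfold sig. rewrite <- !cassoc.
  apply HE_trans with ((idm A' ⊗ (swap B' D' ⊗ idm E')) ∘ (a ⊗ ((b ⊗ d) ⊗ e))).
  { apply HE_castl. apply HE_comp. 2: apply HE_refl. apply HE_castl.
    eapply HE_trans. apply HE_assoc. apply HE_tens. apply HE_refl. apply HE_sym, HE_assoc. }
  replace ((idm A' ⊗ (swap B' D' ⊗ idm E')) ∘ (a ⊗ ((b ⊗ d) ⊗ e))) with
     ((a ⊗ ((d ⊗ b) ⊗ e)) ∘ (idm A ⊗ (swap B D ⊗ idm E))).
  2:{ rewrite <- !tcomp, !cidl, !cidr, snat. reflexivity. }
  apply HE_sym. apply HE_comp. apply HE_castl, HE_castr, HE_refl.
  eapply HE_trans. apply HE_assoc. apply HE_tens. apply HE_refl. apply HE_sym, HE_assoc.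
Qed.

Lemma HE_coassoc (A : ob C) : HE ((copy A ⊗ idm A) ∘ copy A) ((idm A ⊗ copy A) ∘ copy A).
Proof. apply (HE_castE (tens_assoc A A A)). rewrite cassoc. exact (copy_coassoc _ HC A). Qed.

Lemma det_copy (A : ob C) : deterministic (copy A).
Proof. unfold deterministic. rewrite copy_sig.
  set (R := (idm A ⊗ ((copy A ⊗ idm A) ∘ copy A)) ∘ copy A).
  assert (HQ : HE ((copy A ⊗ copy A) ∘ copy A) R).
  { replace (copy A ⊗ copy A) with ((idm A ⊗ idm A ⊗ copy A) ∘ (copy A ⊗ idm A))
      by (rewrite tid, <- tcomp, cidl, cidr; reflexivity).
    rewrite <- cassoc. unfold R.
    apply HE_trans with ((idm A ⊗ (idm A ⊗ copy A)) ∘ ((idm A ⊗ copy A) ∘ copy A)).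
    apply HE_comp. apply HE_coassoc. apply HE_assoc.
    rewrite cassoc, <- tcomp, cidl. apply HE_comp. apply HE_refl. apply HE_tens. apply HE_refl.
    apply HE_sym, HE_coassoc. }
  apply HE_eq. unfold sig. rewrite <- !cassoc.
  apply HE_trans with ((idm A ⊗ (swap A A ⊗ idm A)) ∘ R).
  apply HE_castl. apply HE_comp. apply HE_castl. exact HQ. apply HE_refl.
  replace ((idm A ⊗ (swap A A ⊗ idm A)) ∘ R) with R.
  apply HE_sym, HQ.
  unfold R. rewrite cassoc, <- !tcomp, cidl, cassoc, <- tcomp, ccomm, cidl. reflexivity.
Qed.

Lemma det_tens {X Y X' Y' : ob C} (f : hom X X') (g : hom Y Y') :
  deterministic f -> deterministic g -> deterministic (f ⊗ g).
Proof. unfold deterministic. intros Hf Hg. rewrite !copy_sig.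
  rewrite <- cassoc, <- tcomp, Hf, Hg, tcomp, cassoc, sig_nat, <- cassoc. reflexivity. Qed.

Lemma p1_copy' (X : ob C) : (idm X ⊗ del X) ∘ copy X = cast (eq_sym (tens_unitr X)).
Proof. transitivity (cast (eq_sym (tens_unitr X)) ∘ idm X); [apply cast_cancel_l; rewrite cassoc; apply p1_copy | apply cidr]. Qed.
Lemma p2_copy' (X : ob C) : (del X ⊗ idm X) ∘ copy X = cast (eq_sym (tens_unitl X)).
Proof. transitivity (cast (eq_sym (tens_unitl X)) ∘ idm X); [apply cast_cancel_l; rewrite cassoc; apply p2_copy | apply cidr]. Qed.

Lemma pair_p1_p2 (X Y : ob C) : pairing (@p1 X Y) p2 = idm (tens X Y).
Proof. unfold pairing, p1, p2. rewrite tcomp, copy_sig, <- !cassoc.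
  rewrite (cassoc (copy X ⊗ copy Y) (sig X X Y Y)). rewrite <- sig_nat. rewrite <- cassoc, <- tcomp.
  rewrite p1_copy', p2_copy'. unfold sig. rewrite swap_II. castn. apply cast_id. Qed.

Lemma det_pairing {A X Y : ob C} (f : hom A X) (g : hom A Y) :
  deterministic f -> deterministic g -> deterministic (pairing f g).
Proof. intros. unfold pairing. apply det_comp. apply det_copy. apply det_tens; auto. Qed.
Lemma det_p1 (X Y : ob C) : deterministic (@p1 X Y).
Proof. unfold p1. apply det_comp. apply det_tens. apply det_id. apply det_del. apply det_cast. Qed.
Lemma det_p2 (X Y : ob C) : deterministic (@p2 X Y).
Proof. unfold p2. apply det_comp. apply det_tens. apply det_del. apply det_id. apply det_cast. Qed.
Lemma pair_ext {A X Y : ob C} (f : hom A (tens X Y)) :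
  deterministic f -> f = pairing (p1 ∘ f) (p2 ∘ f).
Proof. intros Hf. unfold pairing. rewrite tcomp, <- cassoc. unfold deterministic in Hf. rewrite <- Hf.
  rewrite cassoc. fold (pairing (@p1 X Y) p2). rewrite pair_p1_p2, cidl. reflexivity. Qed.
Lemma swap_pp (X Y : ob C) : swap X Y = pairing p2 p1.
Proof. rewrite <- (cidr (swap X Y)), <- pair_p1_p2, swap_pair. reflexivity. Qed.
Lemma det_swap (X Y : ob C) : deterministic (swap X Y).
Proof. rewrite swap_pp. apply det_pairing; [apply det_p2 | apply det_p1]. Qed.


Lemma del_tens_HE (Y Z : ob C) : HE (del (tens Y Z)) (del Y ⊗ del Z).
Proof. rewrite (uterm (del (tens Y Z)) (cast (tens_unitl unit) ∘ (del Y ⊗ del Z))). apply HE_castl, HE_refl. Qed.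

Lemma PA1 (X Y Z : ob C) : @p1 X (tens Y Z) ∘ cast (tens_assoc X Y Z) = @p1 X Y ∘ @p1 (tens X Y) Z.
Proof. apply HE_eq. unfold p1.
  apply HE_trans with ((idm X ⊗ del Y) ⊗ del Z).
  { rewrite <- cassoc. apply HE_castl. apply HE_castr.
    apply HE_trans with (idm X ⊗ (del Y ⊗ del Z)).
    apply HE_tens. apply HE_refl. apply del_tens_HE.
    apply HE_sym, HE_assoc. }
  apply HE_trans with (((idm X ⊗ del Y) ⊗ idm unit) ∘ (idm (tens X Y) ⊗ del Z)).
  { rewrite <- tcomp, cidl, cidr. apply HE_refl. }
  apply HE_sym. apply HE_comp. apply HE_castl, HE_refl.
  apply HE_castl. apply HE_sym, HE_unitr.
Qed.

Lemma PA2 (X Y Z : ob C) : @p2 X (tens Y Z) ∘ cast (tens_assoc X Y Z) = @p2 X Y ⊗ idm Z.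
Proof. apply HE_eq. unfold p2.
  apply HE_trans with ((del X ⊗ idm Y) ⊗ idm Z).
  { rewrite <- cassoc. apply HE_castl. apply HE_castr.
    apply HE_trans with (del X ⊗ (idm Y ⊗ idm Z)).
    rewrite tid. apply HE_refl.
    apply HE_sym, HE_assoc. }
  apply HE_sym. apply HE_tens. apply HE_castl, HE_refl. apply HE_refl.
Qed.

Lemma PA1i (X Y Z : ob C) :
  @p1 (tens X Y) Z ∘ cast (eq_sym (tens_assoc X Y Z)) = idm X ⊗ @p1 Y Z.
Proof. apply HE_eq. unfold p1.
  apply HE_trans with (idm X ⊗ (idm Y ⊗ del Z)).
  { rewrite <- cassoc. apply HE_castl. apply HE_castr.
    apply HE_trans with ((idm X ⊗ idm Y) ⊗ del Z).
    rewrite tid. apply HE_refl.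
    apply HE_assoc. }
  apply HE_sym. apply HE_tens. apply HE_refl. apply HE_castl, HE_refl.
Qed.

Lemma PA2i (X Y Z : ob C) :
  @p2 (tens X Y) Z ∘ cast (eq_sym (tens_assoc X Y Z)) = @p2 Y Z ∘ @p2 X (tens Y Z).
Proof. apply HE_eq. unfold p2.
  apply HE_trans with (del X ⊗ (del Y ⊗ idm Z)).
  { rewrite <- cassoc. apply HE_castl. apply HE_castr.
    apply HE_trans with ((del X ⊗ del Y) ⊗ idm Z).
    apply HE_tens. apply del_tens_HE. apply HE_refl.
    apply HE_assoc. }
  apply HE_trans with ((idm unit ⊗ (del Y ⊗ idm Z)) ∘ (del X ⊗ idm (tens Y Z))).
  { rewrite <- tcomp, cidl, cidr. apply HE_refl. }
  apply HE_sym. apply HE_comp. apply HE_castl, HE_refl.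
  apply HE_castl. apply HE_sym, HE_unitl.
Qed.

Lemma Lcopy (H K : ob C) :
  cast (tens_assoc H H K) ∘ (copy H ⊗ idm K) = pairing (@p1 H K) (idm (tens H K)).
Proof.
  assert (D1 : deterministic (cast (tens_assoc H H K) ∘ (copy H ⊗ idm K))).
  { apply det_comp. apply det_tens. apply det_copy. apply det_id. apply det_cast. }
  assert (D2 : deterministic (pairing (@p1 H K) (idm (tens H K)))).
  { apply det_pairing. apply det_p1. apply det_id. }
  rewrite (pair_ext _ D1), (pair_ext _ D2). f_equal.
  - rewrite p1_pair, cassoc, PA1, <- cassoc, p1_tens, cassoc, p1_copy, cidl. reflexivity.
  - rewrite p2_pair, cassoc, PA2, <- tcomp, p2_copy, cidl, tid. reflexivity.
Qed.

Lemma Lcopy' (H K : ob C) :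
  (idm (tens H K) ⊗ @p2 H K) ∘ copy (tens H K) = cast (eq_sym (tens_assoc H K K)) ∘ (idm H ⊗ copy K).
Proof.
  assert (D1 : deterministic ((idm (tens H K) ⊗ @p2 H K) ∘ copy (tens H K))).
  { apply det_comp. apply det_copy. apply det_tens. apply det_id. apply det_p2. }
  assert (D2 : deterministic (cast (eq_sym (tens_assoc H K K)) ∘ (idm H ⊗ copy K))).
  { apply det_comp. apply det_tens. apply det_id. apply det_copy. apply det_cast. }
  rewrite (pair_ext _ D1), (pair_ext _ D2). f_equal.
  - rewrite cassoc, p1_tens, cidl, p1_copy.
    rewrite cassoc, PA1i, <- tcomp, p1_copy, cidl, tid. reflexivity.
  - rewrite cassoc, p2_tens, <- cassoc, p2_copy, cidr.
    rewrite cassoc, PA2i, <- cassoc, p2_tens, cassoc, p2_copy, cidl. reflexivity.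
Qed.


Definition Jx {H A : ob C} (x : hom unit A) : hom H (tens H A) :=
  (idm H ⊗ x) ∘ cast (eq_sym (tens_unitr H)).

Lemma det_Jx {H A : ob C} (x : hom unit A) : deterministic x -> deterministic (@Jx H A x).
Proof. intros Hx. unfold Jx. apply det_comp. apply det_cast. apply det_tens. apply det_id. exact Hx. Qed.
Lemma p1_Jx {H A : ob C} (x : hom unit A) : p1 ∘ @Jx H A x = idm H.
Proof. unfold Jx. rewrite cassoc, p1_tens, cidl. unfold p1.
  rewrite (uterm (del unit) (idm unit)), tid, cidr, cast_comp. apply cast_id. Qed.
Lemma stens_J {H K : ob C} (v : hom unit H) (o : hom unit K) : stens v o = Jx o ∘ v.
Proof. unfold stens, Jx.
  replace (v ⊗ o) with ((idm H ⊗ o) ∘ (v ⊗ idm unit)) by (rewrite <- tcomp, cidl, cidr; reflexivity).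
  rewrite <- !cassoc. f_equal. apply HE_eq.
  eapply HE_trans. apply HE_castr. apply HE_unitr. apply HE_sym. apply HE_castl. apply HE_refl. Qed.
Lemma copy_det_state {A : ob C} (x : hom unit A) : deterministic x -> copy A ∘ x = stens x x.
Proof. intros Hx. unfold deterministic in Hx. rewrite Hx. unfold stens. rewrite copy_unit. reflexivity. Qed.

Lemma margX_p1 {A X Y : ob C} (f : hom A (tens X Y)) : margX f = p1 ∘ f.
Proof. reflexivity. Qed.
Lemma margY_p2 {A X Y : ob C} (f : hom A (tens X Y)) : margY f = p2 ∘ f.
Proof. reflexivity. Qed.

Lemma condX_struct {A X Y : ob C} (f : hom A (tens X Y)) (c : hom (tens X A) Y) :
  is_condX f c -> f = pairing p1 c ∘ pairing (margX f) (idm A).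
Proof. unfold is_condX. intros Hc. set (g := margX f) in *. etransitivity; [exact Hc|].
  rewrite <- (cassoc (copy X ⊗ idm A) (cast (tens_assoc X X A)) (idm X ⊗ c)).
  rewrite Lcopy, tens_pair, cidl, cidr. rewrite <- cassoc. reflexivity. Qed.

Lemma pairing_eval {A X : ob C} (g : hom A X) (x : hom unit A) :
  deterministic x -> pairing g (idm A) ∘ x = Jx x ∘ (g ∘ x).
Proof. intros Hx. unfold pairing. rewrite <- cassoc, copy_det_state by exact Hx.
  unfold stens. rewrite cassoc, <- tcomp, cidl. rewrite <- stens_J. reflexivity. Qed.

Lemma condX_eval {A X Y : ob C} (f : hom A (tens X Y)) (c : hom (tens X A) Y) (x : hom unit A) :
  is_condX f c -> deterministic x -> f ∘ x = pairing (idm X) (c ∘ Jx x) ∘ (margX f ∘ x).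
Proof. intros Hc Hx. transitivity ((pairing p1 c ∘ pairing (margX f) (idm A)) ∘ x).
  f_equal. exact (condX_struct f c Hc).
  rewrite <- cassoc, pairing_eval by exact Hx. rewrite cassoc, pair_det by (apply det_Jx; exact Hx).
  rewrite p1_Jx. reflexivity. Qed.

Lemma margX_swap {A X Y : ob C} (f : hom A (tens X Y)) : margX (swap X Y ∘ f) = margY f.
Proof. rewrite margX_p1, margY_p2, cassoc, p1_swap. reflexivity. Qed.

Lemma condY_state {X K : ob C} (psi : hom unit (tens X K)) (c : hom (tens K unit) X) :
  is_condY psi c -> swap X K ∘ psi = pairing (idm K) (c ∘ cast (eq_sym (tens_unitr K))) ∘ margY psi.
Proof. intros Hc. unfold is_condY in Hc.
  pose proof (condX_eval _ _ (idm unit) Hc (det_id _)) as E.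
  rewrite cidr, cidr, margX_swap in E. rewrite E. unfold Jx. rewrite tid, cidl. reflexivity. Qed.

Lemma condY_param {K Y H : ob C} (a : hom K (tens Y H)) (e : hom (tens H K) Y) :
  is_condY a e -> swap Y H ∘ a = pairing p1 e ∘ pairing (p2 ∘ a) (idm K).
Proof. intros Hc. unfold is_condY in Hc. rewrite (condX_struct _ _ Hc).
  rewrite margX_swap, margY_p2. reflexivity. Qed.

Lemma as_eq_eval {X Y : ob C} (mu : hom unit X) (a b : hom X Y) :
  as_eq mu a b -> a ∘ mu = b ∘ mu.
Proof. unfold as_eq. intros E. rewrite <- (p2_pair (idm X) a), <- (p2_pair (idm X) b).
  rewrite <- !cassoc, E. reflexivity. Qed.

Lemma pairing_W {K H : ob C} (g : hom K H) :
  pairing (pairing g (idm K)) (idm K) = pairing (idm (tens H K)) p2 ∘ pairing g (idm K).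
Proof. change (pairing (idm (tens H K)) p2) with ((idm (tens H K) ⊗ @p2 H K) ∘ copy (tens H K)).
  rewrite Lcopy', <- cassoc, tens_pair, cidl, cidr, <- pair_id_id.
  apply cast_cancel_l. apply assoc_pair. Qed.





Lemma psi_form {X K : ob C} (psi : hom unit (tens X K)) (c' : hom K X) (mu : hom unit K) :
  swap X K ∘ psi = pairing (idm K) c' ∘ mu -> psi = pairing c' (idm K) ∘ mu.
Proof. intros E. transitivity (swap K X ∘ (swap X K ∘ psi)).
  rewrite cassoc, sinv, cidl. reflexivity.
  rewrite E, cassoc, swap_pair. reflexivity. Qed.

Lemma margY_comp {X Y H K : ob C} (psi : hom unit (tens X K)) (f : hom X (tens Y H)) (c' : hom K X)
  (mu : hom unit K) :
  psi = pairing c' (idm K) ∘ mu ->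
  margY (cast (tens_assoc Y H K) ∘ (f ⊗ idm K) ∘ psi) = pairing (p2 ∘ f ∘ c') (idm K) ∘ mu.
Proof. intros E. subst psi. rewrite margY_p2, !cassoc, PA2, <- tcomp, cidl.
  rewrite tens_pair, cidl. reflexivity. Qed.

Lemma swap_comp_aux {Y H K : ob C} (a : hom K (tens Y H)) (g : hom K H) (e : hom (tens H K) Y)
  (mu : hom unit K) :
  a = pairing e p1 ∘ pairing g (idm K) ->
  swap Y (tens H K) ∘ (cast (tens_assoc Y H K) ∘ pairing a (idm K) ∘ mu)
  = pairing (idm (tens H K)) e ∘ (pairing g (idm K) ∘ mu).
Proof. intros E. subst a.
  replace (pairing (pairing e p1 ∘ pairing g (idm K)) (idm K)) with
    ((pairing e p1 ⊗ idm K) ∘ pairing (pairing g (idm K)) (idm K)) by (rewrite tens_pair, cidl; reflexivity).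
  rewrite pairing_W. rewrite !cassoc. rewrite <- (cassoc _ (pairing e p1 ⊗ idm K)).
  rewrite tens_pair, cidl, cidr. rewrite <- (cassoc _ (cast (tens_assoc Y H K))).
  rewrite assoc_pair, pair_p1_p2, swap_pair. rewrite <- cassoc. reflexivity. Qed.

Lemma swap_comp {X Y H K : ob C} (psi : hom unit (tens X K)) (f : hom X (tens Y H)) (c' : hom K X)
  (mu : hom unit K) (e : hom (tens H K) Y) :
  psi = pairing c' (idm K) ∘ mu -> is_condY (f ∘ c') e ->
  swap Y (tens H K) ∘ (cast (tens_assoc Y H K) ∘ (f ⊗ idm K) ∘ psi)
  = pairing (idm (tens H K)) e ∘ (pairing (p2 ∘ f ∘ c') (idm K) ∘ mu).
Proof. intros E He. subst psi. rewrite (cassoc mu (pairing c' (idm K))).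
  rewrite <- (cassoc (pairing c' (idm K)) (f ⊗ idm K)).
  rewrite tens_pair, cidl. rewrite <- (cassoc c' f p2).
  apply swap_comp_aux.
  apply condY_param in He.
  transitivity (swap H Y ∘ (swap Y H ∘ (f ∘ c'))). rewrite cassoc, sinv, cidl. reflexivity.
  rewrite He, cassoc, swap_pair. reflexivity. Qed.

Lemma pair_swap_trick {P Q Z : ob C} (F : hom (tens Q P) Z) :
  pairing (idm (tens Q P)) F ∘ swap P Q = (swap P Q ⊗ idm Z) ∘ pairing (idm (tens P Q)) (F ∘ swap P Q).
Proof. rewrite pair_det by apply det_swap. rewrite tens_pair, !cidl, !cidr. reflexivity. Qed.

Lemma swap_tens_cancel {P Q Z W : ob C} (h : hom W (tens (tens P Q) Z)) :
  (swap Q P ⊗ idm Z) ∘ ((swap P Q ⊗ idm Z) ∘ h) = h.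
Proof. rewrite cassoc, <- tcomp, sinv, cidl, tid, cidl. reflexivity. Qed.

Lemma abs_cont_swap {P Q : ob C} (a b : hom unit (tens P Q)) :
  abs_cont a b -> abs_cont (swap P Q ∘ a) (swap P Q ∘ b).
Proof. intros Hab Z F G Hb. unfold as_eq in *.
  assert (Hb' : as_eq b (F ∘ swap P Q) (G ∘ swap P Q)).
  { unfold as_eq. rewrite !cassoc, !pair_swap_trick in Hb.
    rewrite <- !cassoc in Hb. apply (f_equal (fun h => (swap Q P ⊗ idm Z) ∘ h)) in Hb.
    rewrite !swap_tens_cancel in Hb. exact Hb. }
  apply Hab in Hb'. unfold as_eq in Hb'.
  rewrite !cassoc, !pair_swap_trick, <- !cassoc, Hb'. reflexivity. Qed.

Lemma abs_cont_swap_iff {P Q : ob C} (a b : hom unit (tens P Q)) :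
  abs_cont (swap P Q ∘ a) (swap P Q ∘ b) <-> abs_cont a b.
Proof. split. 2: apply abs_cont_swap.
  intros H. apply abs_cont_swap in H. rewrite !cassoc, !sinv, !cidl in H. exact H. Qed.

Lemma stens_swap {P Q : ob C} (x : hom unit P) (y : hom unit Q) : swap P Q ∘ stens x y = stens y x.
Proof. unfold stens. rewrite cassoc, snat, swap_II, cidr. reflexivity. Qed.

Lemma succ_comp (Hps : precise_supports C) {X Y H K : ob C} (psi : hom unit (tens X K))
  (f : hom X (tens Y H)) (c' : hom K X) (o : hom unit K) (v : hom unit H) :
  psi = pairing c' (idm K) ∘ margY psi -> deterministic o -> deterministic v ->
  (abs_cont (stens v o) (margY (cast (tens_assoc Y H K) ∘ (f ⊗ idm K) ∘ psi))
   <-> (abs_cont o (margY psi) /\ abs_cont v (p2 ∘ f ∘ c' ∘ o))).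
Proof. intros E Ho Hv. rewrite (margY_comp psi f c' (margY psi) E).
  rewrite <- (stens_swap o v), <- (swap_pair (idm K) (p2 ∘ f ∘ c')), <- cassoc.
  eapply iff_trans. apply abs_cont_swap_iff. apply Hps; assumption. Qed.

Lemma comp_post (Hcond : has_conditionals C) {X Y H K : ob C} (psi : hom unit (tens X K))
  (c : hom (tens K unit) X) (f : hom X (tens Y H)) (o : hom unit K) (v : hom unit H)
  (Cc : hom (tens (tens H K) unit) Y) (ep : hom (tens H unit) Y) :
  deterministic o -> deterministic v -> is_condY psi c ->
  is_condY (cast (tens_assoc Y H K) ∘ (f ⊗ idm K) ∘ psi) Cc ->
  abs_cont (stens v o) (margY (cast (tens_assoc Y H K) ∘ (f ⊗ idm K) ∘ psi)) ->
  is_condY (f ∘ (c ∘ cast (eq_sym (tens_unitr K)) ∘ o)) ep ->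
  abs_cont v (p2 ∘ (f ∘ (c ∘ cast (eq_sym (tens_unitr K)) ∘ o))) ->
  Cc ∘ cast (eq_sym (tens_unitr (tens H K))) ∘ stens v o = ep ∘ cast (eq_sym (tens_unitr H)) ∘ v.
Proof. intros Ho Hv Hc HCc Habs Hep Hv2.
  set (c' := c ∘ cast (eq_sym (tens_unitr K))) in *.
  pose proof (condY_state psi c Hc) as E1. fold c' in E1.
  pose proof (psi_form _ _ _ E1) as E2.
  destruct (proj2 Hcond K Y H (f ∘ c')) as [e He].
  pose proof (swap_comp psi f c' (margY psi) e E2 He) as E3.
  pose proof (margY_comp psi f c' (margY psi) E2) as E4.
  pose proof (condY_state _ Cc HCc) as E5.
  assert (A1 : as_eq (margY (cast (tens_assoc Y H K) ∘ (f ⊗ idm K) ∘ psi))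
                 (Cc ∘ cast (eq_sym (tens_unitr (tens H K)))) e).
  { unfold as_eq. rewrite <- E5. rewrite E4. exact E3. }
  apply Habs, as_eq_eval in A1. rewrite A1.
  rewrite stens_J, cassoc.
  apply as_eq_eval. apply Hv2. unfold as_eq.
  unfold is_condY in He. pose proof (condX_eval _ _ o He Ho) as E6.
  rewrite margX_swap, margY_p2 in E6.
  pose proof (condY_state _ ep Hep) as E7. rewrite margY_p2 in E7.
  clearbody c'. rewrite !cassoc in E6. rewrite !cassoc in E7. rewrite !cassoc. rewrite <- E6, <- E7. reflexivity. Qed.

Lemma post_unique {X : ob C} (s : ObsHom unit X) (c1 c2 : hom (tens (okey s) unit) X) :
  succeeds s -> is_condY (omap s) c1 -> is_condY (omap s) c2 -> posterior s c1 = posterior s c2.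
Proof. intros Hs H1 H2. unfold posterior. apply as_eq_eval. apply Hs. unfold as_eq.
  rewrite <- (condY_state _ _ H1), <- (condY_state _ _ H2). reflexivity. Qed.

End Markov.


Theorem theorem5p7 (C : MarkovData) (HC : MarkovAxioms C)
  (Hcond : has_conditionals C) (Hps : precise_supports C) :
  (forall (X : ob C) (s : ObsHom unit X), obs_valid s -> obs_sim s s) /\
  (forall (X : ob C) (s t : ObsHom unit X),
      obs_valid s -> obs_valid t -> obs_sim s t -> obs_sim t s) /\
  (forall (X : ob C) (s t u : ObsHom unit X),
      obs_valid s -> obs_valid t -> obs_valid u ->
      obs_sim s t -> obs_sim t u -> obs_sim s u) /\
  (forall (X Y : ob C) (s t : ObsHom unit X) (m : ObsHom X Y),
      obs_valid s -> obs_valid t -> obs_valid m ->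
      obs_sim s t -> obs_sim (obs_comp m s) (obs_comp m t)).
Proof.
  split; [|split; [|split]].
  - intros X s Hs. destruct (classic (succeeds s)) as [S|S].
    + left. split; [exact S|split; [exact S|]]. intros c c' H1 H2. apply (post_unique HC); assumption.
    + right. auto.
  - intros X s t _ _ [[Ss [St P]] | [Ss St]].
    + left. split; [exact St|split; [exact Ss|]]. intros c c' H1 H2. symmetry. apply P; auto.
    + right; auto.
  - intros X s t u _ _ _ Hst Htu.
    destruct Hst as [[Ss [St P1]]|[Ss St]]; destruct Htu as [[St' [Su P2]]|[St' Su]].
    + left. split; [exact Ss| split; [exact Su|]]. intros c c'' H1 H3.
      destruct (proj2 Hcond unit X (okey t) (omap t)) as [ct Hct].
      rewrite (P1 c ct H1 Hct). apply P2; auto.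
    + contradiction.
    + contradiction.
    + right; auto.
  - intros X Y s t m Hs Ht Hm Hst.
    destruct s as [K psi o]; destruct t as [K' psi' o']; destruct m as [H f v].
    unfold obs_valid in *; simpl in Hs, Ht, Hm.
    destruct (proj2 Hcond unit X K psi) as [cs Hcs].
    destruct (proj2 Hcond unit X K' psi') as [ct Hct].
    pose proof (succ_comp HC Hps psi f _ o v
                 (psi_form HC _ _ _ (condY_state HC psi cs Hcs)) Hs Hm) as SS.
    pose proof (succ_comp HC Hps psi' f _ o' v
                 (psi_form HC _ _ _ (condY_state HC psi' ct Hct)) Ht Hm) as ST.
    unfold obs_sim, succeeds, posterior in *. simpl in *.
    destruct Hst as [[Ss [St P]] | [Ss St]].
    + pose proof (P cs ct Hcs Hct) as Ep. simpl in Ep.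
      destruct (classic (abs_cont v (p2 ∘ f ∘ (cs ∘ cast (eq_sym (tens_unitr K))) ∘ o))) as [V|V].
      * assert (V' : abs_cont v (p2 ∘ f ∘ (ct ∘ cast (eq_sym (tens_unitr K'))) ∘ o')).
        { repeat rewrite <- (cassoc HC) in V; repeat rewrite <- (cassoc HC). repeat rewrite <- (cassoc HC) in Ep. rewrite <- Ep. exact V. }
        assert (SSc := proj2 SS (conj Ss V)). assert (STc := proj2 ST (conj St V')).
        left. split; [exact SSc| split; [exact STc|]].
        intros Cs Ct HCs HCt.
        destruct (proj2 Hcond unit Y H (f ∘ (cs ∘ cast (eq_sym (tens_unitr K)) ∘ o))) as [ep Hep].
        assert (Hep' : is_condY (f ∘ (ct ∘ cast (eq_sym (tens_unitr K')) ∘ o')) ep) by (rewrite <- Ep; exact Hep).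
        rewrite (comp_post HC Hcond psi cs f o v Cs ep Hs Hm Hcs HCs SSc Hep).
        rewrite (comp_post HC Hcond psi' ct f o' v Ct ep Ht Hm Hct HCt STc Hep'). reflexivity.
        { repeat rewrite <- (cassoc HC) in V'; repeat rewrite <- (cassoc HC). exact V'. }
        { repeat rewrite <- (cassoc HC) in V; repeat rewrite <- (cassoc HC). exact V. }
      * right. split; intros Hc; apply V.
        -- exact (proj2 (proj1 SS Hc)).
        -- apply ST in Hc. destruct Hc as [_ Hc].
           repeat rewrite <- (cassoc HC) in Hc; repeat rewrite <- (cassoc HC). repeat rewrite <- (cassoc HC) in Ep. rewrite Ep. exact Hc.
    + right. split; intros Hc.
      * apply Ss. exact (proj1 (proj1 SS Hc)).
      * apply St. exact (proj1 (proj1 ST Hc)).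
Qed.
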